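(* Let $\varpi$ be a minuscule fundamental weight, $\bar\phi\in W/W_{P_\varpi}$, $\phi$ the minimal length element of $\bar\phi$, $\phi=s_{\gamma_1}\cdots s_{\gamma_n}$ a reduced expression with simple roots $\gamma_k$, and $\beta_k=i(\gamma_k)$. Let $\beta$ be the unique simple root such that $\langle\beta^\vee,i(\varpi)\rangle=1$. Then $\beta_n=\beta$.
   Context: $G$ is a semisimple algebraic group with maximal torus $T$, Borel subgroup $B$, simple roots $S$, Weyl group $W$ with longest element $w_0$; $\alpha^\vee$ denotes the coroot of $\alpha$. The Weyl involution $i$ sends a simple root $\gamma$ to $-w_0(\gamma)$ and a fundamental weight $\varpi$ to $-w_0(\varpi)$. A fundamental weight $\varpi$ is minuscule if $\langle\alpha^\vee,\varpi\rangle\le1$ for all positive roots $\alpha$; $P_\varpi$ is the associated maximal parabolic subgroup and $W_{P_\varpi}$ its Weyl group. *)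

(* Defs.v *)
From HB Require Import structures.
From mathcomp Require Import all_boot all_order all_algebra.
Set Implicit Arguments. Unset Strict Implicit. Unset Printing Implicit Defensive.
Import Order.TTheory GRing.Theory Num.Theory.
Local Open Scope ring_scope.

Section RootSystems.
Variables (R : realFieldType) (l : nat).
Local Notation V := 'rV[R]_l.

Definition dotv (u v : V) : R := (u *m v^T) 0 0.

(* coroot pairing  <a^vee, v> = 2 (a,v)/(a,a) *)
Definition pairing (a v : V) : R := 2 * dotv a v / dotv a a.

Definition refl (a : V) (v : V) : V := v - pairing a v *: a.

Definition root_system (Phi : seq V) : Prop :=
  [/\ uniq Phi /\ (0 : V) \notin Phi,
      (forall v : V, (forall a, a \in Phi -> dotv a v = 0) -> v = 0),
      (forall a b, a \in Phi -> b \in Phi -> refl a b \in Phi),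
      (forall a b, a \in Phi -> b \in Phi -> exists z : int, pairing a b = z%:~R) &
      (forall (a : V) (c : R), a \in Phi -> c *: a \in Phi -> c = 1 \/ c = -1)].

Definition nat_comb (S : seq V) (a : V) : Prop :=
  exists c : 'I_(size S) -> nat, a = \sum_(i < size S) (c i)%:R *: S`_i.

Definition is_base (Phi S : seq V) : Prop :=
  [/\ uniq S, {subset S <= Phi},
      (forall c : 'I_(size S) -> R,
          \sum_(i < size S) c i *: S`_i = 0 -> forall i, c i = 0) &
      (forall a, a \in Phi -> nat_comb S a \/ nat_comb S (- a))].

Definition pos_root (Phi S : seq V) (a : V) : Prop := a \in Phi /\ nat_comb S a.

(* the Weyl group element  s_{g1} o ... o s_{gn}  of a word [:: g1; ...; gn] *)
Definition wordfun (w : seq V) : V -> V := foldr (fun a f => refl a \o f) id w.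

Definition sword (S : seq V) (w : seq V) : Prop := all (fun g => g \in S) w.

Definition reduced (S : seq V) (w : seq V) : Prop :=
  sword S w /\ forall w', sword S w' -> wordfun w' =1 wordfun w -> (size w <= size w')%N.

Definition fund_weight (S : seq V) (alpha varpi : V) : Prop :=
  alpha \in S /\ forall g, g \in S -> pairing g varpi = (g == alpha)%:R.

Definition minuscule (Phi S : seq V) (varpi : V) : Prop :=
  forall a, pos_root Phi S a -> pairing a varpi <= 1.

(* word phis gives the minimal length element of its coset phi W_{P_varpi},
   where W_{P_varpi} is generated by the simple reflections s_g, g <> alpha *)
Definition min_coset_rep (S : seq V) (alpha : V) (phis : seq V) : Prop :=
  forall u, all (fun g => (g \in S) && (g != alpha)) u ->
  forall w', sword S w' -> wordfun w' =1 wordfun (phis ++ u) ->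
  (size phis <= size w')%N.

Definition longest_word (S : seq V) (w0s : seq V) : Prop :=
  reduced S w0s /\ forall w, reduced S w -> (size w <= size w0s)%N.

(* Weyl involution i(x) = - w0(x) *)
Definition weyl_inv (w0s : seq V) (x : V) : V := - wordfun w0s x.

End RootSystems.

(* Main.v *)
Require Import Defs.
From mathcomp Require Import all_boot all_order all_algebra.
From mathcomp Require Import zify ring.
From Stdlib Require Import ClassicalDescription.
Set Implicit Arguments. Unset Strict Implicit. Unset Printing Implicit Defensive.
Import Order.TTheory GRing.Theory Num.Theory.
Local Open Scope ring_scope.

Section Lin.
Variables (R : realFieldType) (l : nat).
Local Notation V := 'rV[R]_l.

Lemma dotvE (u v : V) : dotv u v = \sum_k u 0 k * v 0 k.
Proof. by rewrite /dotv !mxE; apply: eq_bigr => k _; rewrite mxE. Qed.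

Lemma dotvC (u v : V) : dotv u v = dotv v u.
Proof. by rewrite !dotvE; apply: eq_bigr => k _; rewrite mulrC. Qed.

Lemma dotvDr (u v w : V) : dotv u (v + w) = dotv u v + dotv u w.
Proof. by rewrite !dotvE -big_split; apply: eq_bigr => k _; rewrite mxE mulrDr. Qed.

Lemma dotvZr (u v : V) c : dotv u (c *: v) = c * dotv u v.
Proof. by rewrite !dotvE mulr_sumr; apply: eq_bigr => k _; rewrite mxE mulrCA. Qed.

Lemma dotvNr (u v : V) : dotv u (- v) = - dotv u v.
Proof. by rewrite -scaleN1r dotvZr mulN1r. Qed.

Lemma dotvBr (u v w : V) : dotv u (v - w) = dotv u v - dotv u w.
Proof. by rewrite dotvDr dotvNr. Qed.

Lemma dotvDl (u v w : V) : dotv (v + w) u = dotv v u + dotv w u.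
Proof. by rewrite !(dotvC _ u) dotvDr. Qed.

Lemma dotvZl (u v : V) c : dotv (c *: v) u = c * dotv v u.
Proof. by rewrite !(dotvC _ u) dotvZr. Qed.

Lemma dotvNl (u v : V) : dotv (- v) u = - dotv v u.
Proof. by rewrite !(dotvC _ u) dotvNr. Qed.

Lemma dotvBl (u v w : V) : dotv (v - w) u = dotv v u - dotv w u.
Proof. by rewrite dotvDl dotvNl. Qed.

Lemma dotv0 : dotv (0:V) 0 = 0.
Proof. by rewrite dotvE big1 // => k _; rewrite mxE mul0r. Qed.

Lemma dotv_neq0 (a : V) : a != 0 -> dotv a a != 0.
Proof.
move=> a0; apply/negP => /eqP H; move/negP: a0; apply; apply/eqP.
rewrite dotvE in H.
apply/rowP => k; rewrite mxE.
have := psumr_eq0P (P := xpredT) (F := fun k => a 0 k * a 0 k)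
   (fun k _ => ltac:(by rewrite /= -expr2 sqr_ge0)) H (i := k) isT.
by move/eqP; rewrite mulf_eq0 orbb => /eqP.
Qed.

Lemma pairingDr (a u v : V) : pairing a (u + v) = pairing a u + pairing a v.
Proof. by rewrite /pairing dotvDr mulrDr mulrDl. Qed.

Lemma pairingZr (a u : V) c : pairing a (c *: u) = c * pairing a u.
Proof. rewrite /pairing dotvZr; ring. Qed.

Lemma pairingNr (a u : V) : pairing a (- u) = - pairing a u.
Proof. by rewrite -scaleN1r pairingZr mulN1r. Qed.

Lemma pairing_self (a : V) : a != 0 -> pairing a a = 2.
Proof. by move=> a0; rewrite /pairing mulfK // dotv_neq0. Qed.

Lemma reflD (a u v : V) : refl a (u + v) = refl a u + refl a v.
Proof. by rewrite /refl pairingDr scalerDl; rewrite opprD addrACA. Qed.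

Lemma reflZ (a u : V) c : refl a (c *: u) = c *: refl a u.
Proof. by rewrite /refl pairingZr scalerBr scalerA. Qed.

Lemma reflN (a u : V) : refl a (- u) = - refl a u.
Proof. by rewrite -!scaleN1r reflZ. Qed.

Lemma refl0 (a : V) : refl a 0 = 0.
Proof. by rewrite -[0 : V](scale0r (0:V)) reflZ !scale0r. Qed.

Lemma refl_self (a : V) : a != 0 -> refl a a = - a.
Proof.
move=> a0; rewrite /refl pairing_self //.
rewrite -{1}(scale1r a) -scalerBl -scaleN1r; congr (_ *: _); ring.
Qed.

Lemma reflK (a : V) : a != 0 -> involutive (refl a).
Proof.
move=> a0 v; rewrite {2}/refl reflD reflN reflZ refl_self //.
by rewrite scalerN opprK /refl subrK.
Qed.

Lemma refl_dot (a u v : V) : a != 0 -> dotv (refl a u) (refl a v) = dotv u v.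
Proof.
move=> a0; have := dotv_neq0 a0; rewrite /refl /pairing => H.
rewrite !(dotvBl, dotvBr, dotvZl, dotvZr) ?(dotvC v a) ?(dotvC u a).
field; exact: H.
Qed.

Lemma wordfun_cons a w (x : V) : wordfun (a :: w) x = refl a (wordfun w x).
Proof. by []. Qed.

Lemma wordfun_cat (w1 w2 : seq V) x : wordfun (w1 ++ w2) x = wordfun w1 (wordfun w2 x).
Proof. by elim: w1 x => //= a w1 IH x; rewrite IH. Qed.

Lemma wordfun_rcons (w : seq V) a x : wordfun (rcons w a) x = wordfun w (refl a x).
Proof. by rewrite -cats1 wordfun_cat. Qed.

Lemma wordfunD (w : seq V) x y : wordfun w (x + y) = wordfun w x + wordfun w y.
Proof. by elim: w => //= a w IH; rewrite IH reflD. Qed.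

Lemma wordfunZ (w : seq V) c x : wordfun w (c *: x) = c *: wordfun w x.
Proof. by elim: w => //= a w IH; rewrite IH reflZ. Qed.

Lemma wordfunN (w : seq V) x : wordfun w (- x) = - wordfun w x.
Proof. by rewrite -!scaleN1r wordfunZ. Qed.

Lemma wordfun0 (w : seq V) : wordfun w 0 = 0.
Proof. by rewrite -[0 : V](scale0r (0:V)) wordfunZ !scale0r. Qed.

Lemma wordfun_sum (w : seq V) n (F : 'I_n -> V) :
  wordfun w (\sum_i F i) = \sum_i wordfun w (F i).
Proof. exact: (big_morph _ (wordfunD w) (wordfun0 w)). Qed.

Lemma wordfun_dot (w : seq V) x y : all (fun a => a != 0) w ->
  dotv (wordfun w x) (wordfun w y) = dotv x y.
Proof. by elim: w => //= a w IH /andP[a0 /IH <-]; rewrite refl_dot. Qed.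

Lemma wordfun_revK (w : seq V) x : all (fun a => a != 0) w ->
  wordfun w (wordfun (rev w) x) = x.
Proof.
elim: w x => //= a w IH x /andP[a0 H].
by rewrite rev_cons wordfun_rcons IH // reflK.
Qed.

Lemma wordfun_conj (y : seq V) a b x : all (fun c => c != 0) y -> a != 0 ->
  wordfun y a = b -> refl b (wordfun y (refl a x)) = wordfun y x.
Proof.
move=> Hy a0 <-.
have b0 : wordfun y a != 0.
  apply: contra (dotv_neq0 a0) => /eqP H.
  by rewrite -(wordfun_dot a a Hy) H dotv0.
rewrite {1}/refl wordfunD wordfunN wordfunZ.
have -> : pairing (wordfun y a) (wordfun y x - pairing a x *: wordfun y a) = - pairing a x.
  rewrite pairingDr pairingNr pairingZr pairing_self // /pairing !wordfun_dot //; ring.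
by rewrite scaleNr opprK subrK.
Qed.
End Lin.

Section Roots.
Variables (R : realFieldType) (l : nat) (Phi S : seq 'rV[R]_l).
Hypothesis RS : root_system Phi.
Hypothesis BS : is_base Phi S.
Local Notation V := 'rV[R]_l.
Local Notation n := (size S).

Lemma Phi_neq0 a : a \in Phi -> a != 0.
Proof. by case: RS => -[_ H] _ _ _ _ Ha; apply: contraNneq H => <-. Qed.

Lemma S_Phi g : g \in S -> g \in Phi.
Proof. by case: BS => _ H _ _; apply: H. Qed.

Lemma Phi_refl a b : a \in Phi -> b \in Phi -> refl a b \in Phi.
Proof. by case: RS => _ _ H _ _; apply: H. Qed.

Lemma Phi_opp a : a \in Phi -> - a \in Phi.
Proof. by move=> Ha; rewrite -refl_self ?Phi_neq0 // Phi_refl. Qed.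

Lemma sword_nz w : sword S w -> all (fun a => a != 0) w.
Proof. by move=> /allP H; apply/allP => a /H /S_Phi /Phi_neq0. Qed.

Lemma wordfun_Phi w a : sword S w -> a \in Phi -> wordfun w a \in Phi.
Proof.
elim: w => //= b w IH /andP[bS Hw] Ha.
by apply: Phi_refl; [apply: S_Phi | apply: IH].
Qed.

Lemma indep (c : 'I_n -> R) : \sum_i c i *: S`_i = 0 -> forall i, c i = 0.
Proof. by case: BS => _ _ H _; apply: H. Qed.

Lemma coef_uniq (c d : 'I_n -> R) :
  \sum_i c i *: S`_i = \sum_i d i *: S`_i -> forall i, c i = d i.
Proof.
move=> H i; apply/eqP; rewrite -subr_eq0; apply/eqP.
apply: (indep (c := fun i => c i - d i)).
by rewrite (eq_bigr (fun i => c i *: S`_i - d i *: S`_i)) ?sumrB ?H ?subrr // => k _; rewrite scalerBl.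
Qed.

Lemma S_sum (j : 'I_n) : S`_j = \sum_i (i == j)%:R *: S`_i.
Proof.
rewrite (bigD1 j) //= eqxx scale1r big1 ?addr0 // => i /negbTE ->.
by rewrite scale0r.
Qed.

Lemma nat_comb0 : nat_comb S 0.
Proof. by exists (fun _ => 0%N); rewrite big1 // => i _; rewrite scale0r. Qed.

Lemma nat_combD x y : nat_comb S x -> nat_comb S y -> nat_comb S (x + y).
Proof.
move=> [c ->] [d ->]; exists (fun i => c i + d i)%N.
by rewrite -big_split; apply: eq_bigr => i _; rewrite natrD scalerDl.
Qed.

Lemma nat_combZ (m : nat) x : nat_comb S x -> nat_comb S (m%:R *: x).
Proof.
move=> [c ->]; exists (fun i => m * c i)%N.
by rewrite scaler_sumr; apply: eq_bigr => i _; rewrite natrM scalerA.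
Qed.

Lemma nat_comb_S g : g \in S -> nat_comb S g.
Proof.
move=> gS; have jP : (index g S < n)%N by rewrite index_mem.
exists (fun i => (i == Ordinal jP) : nat).
by rewrite -S_sum /= nth_index.
Qed.

Lemma pos_neg_false a : a \in Phi -> nat_comb S a -> nat_comb S (- a) -> False.
Proof.
move=> Ha [c Hc] [d Hd].
have H0 : \sum_i (c i + d i)%:R *: S`_i = 0.
  by rewrite (eq_bigr (fun i => (c i)%:R *: S`_i + (d i)%:R *: S`_i)) ?big_split /= -?Hc -?Hd ?subrr // => i _; rewrite natrD scalerDl.
have Hc0 : forall i, c i = 0%N.
  by move=> i; have := indep H0 i; move/eqP; rewrite pnatr_eq0 addn_eq0 => /andP[/eqP].
move/negP: (Phi_neq0 Ha); apply; rewrite Hc big1 // => i _.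
by rewrite Hc0 scale0r.
Qed.

Definition posb (a : V) : bool :=
  if excluded_middle_informative (nat_comb S a) then true else false.

Lemma posbP a : reflect (nat_comb S a) (posb a).
Proof. by rewrite /posb; case: excluded_middle_informative => H; constructor. Qed.

Lemma pos_or_neg a : a \in Phi -> nat_comb S a \/ nat_comb S (- a).
Proof. by case: BS => _ _ _ H; apply: H. Qed.

Lemma posbN a : a \in Phi -> posb (- a) = ~~ posb a.
Proof.
move=> Ha; case: (posbP a) => H1; case: (posbP (-a)) => H2 //.
- by case: (pos_neg_false Ha H1 H2).
- by case: (pos_or_neg Ha).
Qed.

Lemma pos_refl g a : g \in S -> a \in Phi -> nat_comb S a -> a != g ->
  nat_comb S (refl g a).
Proof.
move=> gS Ha Hpos ag.
have Hr : refl g a \in Phi by apply: Phi_refl => //; apply: S_Phi.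
case: (pos_or_neg Hr) => // Hneg.
exfalso; move: Hpos Hneg => [c Hc] [d Hd].
have jP : (index g S < n)%N by rewrite index_mem.
pose j := Ordinal jP.
have gj : g = S`_j by rewrite /= nth_index.
set k := pairing g a.
have E : \sum_i (c i + d i)%:R *: S`_i = \sum_i (k * (i == j)%:R) *: S`_i.
  rewrite (eq_bigr (fun i => (c i)%:R *: S`_i + (d i)%:R *: S`_i)); last first.
    by move=> i _; rewrite natrD scalerDl.
  rewrite big_split /= -Hc -Hd /refl opprB addrC subrK.
  by rewrite (eq_bigr (fun i => k *: ((i == j)%:R *: S`_i))) -?scaler_sumr -?S_sum -?gj // => i _; rewrite scalerA.
have Hci : forall i, i != j -> c i = 0%N.
  move=> i ij; have := coef_uniq E i; rewrite (negbTE ij) mulr0 => /eqP.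
  by rewrite pnatr_eq0 addn_eq0 => /andP[/eqP].
have Ea : a = (c j)%:R *: g.
  rewrite Hc (bigD1 j) //= big1 ?addr0 -?gj // => i ij.
  by rewrite Hci // scale0r.
case: RS => _ _ _ _ Hred.
have := Hred g (c j)%:R (S_Phi gS); rewrite -Ea => /(_ Ha) [H1|H1].
  by move/negP: ag; apply; rewrite Ea H1 scale1r.
have : (0 : R) <= (c j)%:R by apply: ler0n.
by rewrite H1 ler0N1.
Qed.

Lemma posb_refl g b : g \in S -> b \in Phi -> b != g -> b != - g ->
  posb (refl g b) = posb b.
Proof.
move=> gS Hb bg bng.
have gP := S_Phi gS.
case: (posbP b) => Hp.
  by apply/posbP; apply: pos_refl.
have Hn : nat_comb S (- b) by case: (pos_or_neg Hb).
have H2 : nat_comb S (refl g (- b)).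
  by apply: pos_refl => //; [apply: Phi_opp | apply: contra bng => /eqP <-; rewrite opprK].
apply/posbP => H3.
apply: (pos_neg_false (Phi_refl gP Hb) H3).
by rewrite -reflN.
Qed.


Lemma neq_opp (a : V) : a != 0 -> a != - a.
Proof.
move=> a0; apply: contra a0; rewrite -addr_eq0 -mulr2n -scaler_nat scaler_eq0.
by rewrite pnatr_eq0 orFb.
Qed.

Lemma uniq_Phi : uniq Phi.
Proof. by case: RS => -[]. Qed.

Definition inv (f : V -> V) := count (fun a => posb a && ~~ posb (f a)) Phi.

Lemma inv_ext f f' : f =1 f' -> inv f = inv f'.
Proof. by move=> E; apply: eq_count => a; rewrite E. Qed.

Lemma count_add (s : seq V) (P1 P2 P3 P4 : pred V) :
  {in s, forall x, (P1 x : nat) + P2 x = P3 x + P4 x}%N ->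
  (count P1 s + count P2 s = count P3 s + count P4 s)%N.
Proof.
elim: s => //= x s IH H.
have := H x (mem_head _ _); have := IH (fun y ys => H y (@mem_behead _ (x :: s) y ys)).
lia.
Qed.

Lemma count_const_eq (g : V) (c : bool) : g \in Phi ->
  count (fun b => (b == g) && c) Phi = c.
Proof.
move=> gP; case: c.
  by rewrite (eq_count (a2 := pred1 g)) ?count_uniq_mem ?gP ?uniq_Phi // => b; rewrite andbT.
by rewrite (eq_count (a2 := pred0)) ?count_pred0 // => b; rewrite andbF.
Qed.

Lemma perm_refl g : g \in Phi -> perm_eq (map (refl g) Phi) Phi.
Proof.
move=> gP; have g0 := Phi_neq0 gP.
apply: uniq_perm; first by rewrite map_inj_uniq ?uniq_Phi //; apply: (can_inj (reflK g0)).
  exact: uniq_Phi.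
move=> x; apply/mapP/idP => [[y yP ->]|xP]; first exact: Phi_refl.
by exists (refl g x); [apply: Phi_refl | rewrite reflK].
Qed.

Lemma inv_step t g : sword S t -> g \in S ->
  (inv (wordfun (rcons t g)) + ~~ posb (wordfun t g) =
   inv (wordfun t) + posb (wordfun t g))%N.
Proof.
move=> Ht gS; have gP := S_Phi gS; have g0 := Phi_neq0 gP.
set v := wordfun t.
have vP : forall x, x \in Phi -> v x \in Phi by move=> x; apply: wordfun_Phi.
rewrite (inv_ext (f' := v \o refl g)); last by move=> x; rewrite wordfun_rcons.
have -> : inv (v \o refl g) = count (fun b => posb (refl g b) && ~~ posb (v b)) Phi.
  rewrite /inv (eq_count (a2 := (fun b => posb (refl g b) && ~~ posb (v b)) \o refl g)); last first.
    by move=> a /=; rewrite reflK.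
  by rewrite -count_map; apply/permP; apply: perm_refl.
rewrite -(count_const_eq (~~ posb (v g)) gP).
rewrite -(count_const_eq (posb (v g)) (Phi_opp gP)).
apply: count_add => b bP.
have pg : posb g by apply/posbP; apply: nat_comb_S.
have gng : (g == - g) = false by apply/negbTE; apply: neq_opp.
case: (eqVneq b g) => [->|bg].
  by rewrite refl_self // posbN // pg gng /= addn0.
case: (eqVneq b (- g)) => [->|bng].
  rewrite reflN refl_self // opprK pg posbN // pg /= /v wordfunN -/v posbN ?vP //.
  by case: (posb (v g)).
by rewrite posb_refl //= addn0.
Qed.

Lemma inv_id : inv id = 0%N.
Proof. by rewrite /inv (eq_count (a2 := pred0)) ?count_pred0 // => a /=; rewrite andbN. Qed.

Lemma inv_le t : sword S t -> (inv (wordfun t) <= size t)%N.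
Proof.
elim/last_ind: t => [|t g IH]; first by rewrite (inv_ext (f' := id)) ?inv_id.
rewrite /sword all_rcons => /andP[gS Ht].
have := inv_step Ht gS; have := IH Ht; rewrite size_rcons.
case: (posb _) => /=; lia.
Qed.

Lemma reduced_rcons p a : reduced S (rcons p a) -> reduced S p.
Proof.
move=> [Hs Hr]; move: (Hs); rewrite /sword all_rcons => /andP[aS Hp]; split => // w' Hw' E.
have := Hr (rcons w' a); rewrite !size_rcons; apply.
  by rewrite /sword all_rcons aS.
by move=> x; rewrite !wordfun_rcons E.
Qed.

Lemma deletion p c : sword S p -> c \in Phi -> posb c -> ~~ posb (wordfun p c) ->
  exists x b y, p = x ++ b :: y /\ wordfun y c = b.
Proof.
move=> + cP pc; elim: p => [|b p IH] /=; first by rewrite pc.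
move=> /andP[bS Hp] Hn.
case: (boolP (posb (wordfun p c))) => Hpc; last first.
  by have [x [b' [y [-> E]]]] := IH Hp Hpc; exists (b :: x), b', y.
exists [::], b, p; split => //.
apply/eqP; apply: contraNT Hn => nb.
apply/posbP; apply: pos_refl => //; first exact: wordfun_Phi.
exact/posbP.
Qed.

Lemma reduced_pos p a : reduced S (rcons p a) -> posb (wordfun p a).
Proof.
move=> Hr; move: (Hr) => [Hs Hmin]; move: (Hs); rewrite /sword all_rcons => /andP[aS Hp].
apply/negPn/negP => Hn.
have [x [b [y [Ep Ey]]]] := deletion Hp (S_Phi aS) (introT (posbP _) (nat_comb_S aS)) Hn.
move: Hp; rewrite Ep /sword all_cat /= => /and3P[Hx bS Hy].
have Hsw : sword S (x ++ y) by rewrite /sword all_cat Hx Hy.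
have E : wordfun (x ++ y) =1 wordfun (rcons p a).
  move=> z; rewrite Ep wordfun_rcons !wordfun_cat /= wordfun_conj //.
    exact: sword_nz.
  exact: (Phi_neq0 (S_Phi aS)).
have := Hmin _ Hsw E; rewrite size_rcons Ep !size_cat /=; lia.
Qed.

Lemma inv_reduced t : reduced S t -> inv (wordfun t) = size t.
Proof.
elim/last_ind: t => [|t g IH]; first by rewrite (inv_ext (f' := id)) ?inv_id.
move=> Hr; have Hp := reduced_rcons Hr.
have := reduced_pos Hr; move: (Hr) => [Hs _]; move: Hs; rewrite /sword all_rcons => /andP[gS Ht].
have := inv_step Ht gS; rewrite (IH Hp) size_rcons => H pos; move: H; rewrite pos /=; lia.
Qed.


Lemma aux1 h r : (0 < h)%N -> (h + r = 1)%N -> r = 0%N.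
Proof. lia. Qed.

Lemma aux2 c h r : (0 < h)%N -> c != 0%N -> (c * h + r = 1)%N -> c = 1%N.
Proof. move=> H1 /eqP H2 H3; nia. Qed.

Section Longest.
Variable w0s : seq V.
Hypothesis LW : longest_word S w0s.

Lemma w0_sword : sword S w0s.
Proof. by case: LW => -[]. Qed.

Lemma w0_neg g : g \in S -> ~~ posb (wordfun w0s g).
Proof.
move=> gS; apply/negP => pg.
case: LW => Hred Hmax; have Hs := w0_sword.
have Hr : reduced S (rcons w0s g).
  split; first by rewrite /sword all_rcons gS.
  move=> w' Hw' E.
  have := inv_le Hw'; rewrite (inv_ext E).
  have := inv_step Hs gS; rewrite pg (inv_reduced Hred) size_rcons /=; lia.
by have := Hmax _ Hr; rewrite size_rcons ltnn.
Qed.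

Lemma w0S_neg (i : 'I_n) : nat_comb S (- wordfun w0s S`_i).
Proof.
have iS : S`_i \in S by apply: mem_nth.
have := w0_neg iS; case: (pos_or_neg (wordfun_Phi w0_sword (S_Phi iS))) => // H /negP [].
exact/posbP.
Qed.

Lemma w0_pos_neg a : nat_comb S a -> nat_comb S (- wordfun w0s a).
Proof.
move=> [c ->]; rewrite wordfun_sum -sumrN.
apply: (big_ind (nat_comb S)); [exact: nat_comb0 | exact: nat_combD | ].
move=> i _; rewrite wordfunZ -scalerN; apply: nat_combZ; exact: w0S_neg.
Qed.

Lemma w0_nz : all (fun a => a != 0) w0s.
Proof. exact: (sword_nz w0_sword). Qed.

Lemma u_neg b : b \in Phi -> posb b -> ~~ posb (wordfun (rev w0s) b).
Proof.
move=> bP pb; apply/negP => /posbP pub.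
have := w0_pos_neg pub; rewrite wordfun_revK; last exact: w0_nz.
by apply: (pos_neg_false bP); apply/posbP.
Qed.

Lemma u_sword : sword S (rev w0s).
Proof. by rewrite /sword all_rev; exact: w0_sword. Qed.

Lemma u_simple beta : beta \in S -> - wordfun (rev w0s) beta \in S.
Proof.
move=> bS; have bP := S_Phi bS.
set u := wordfun (rev w0s).
have uP : u beta \in Phi by apply: wordfun_Phi => //; exact: u_sword.
have dP : - u beta \in Phi by apply: Phi_opp.
have [c Hc] : nat_comb S (- u beta).
  by case: (pos_or_neg uP) => // /posbP H; move: (u_neg bP (introT (posbP _) (nat_comb_S bS))); rewrite -/u H.
have [d Hd] : exists d : 'I_n -> 'I_n -> nat, forall i : 'I_n,
    - wordfun w0s S`_i = \sum_(j < n) (d i j)%:R *: S`_j.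
  have H : forall i : 'I_n, exists e : 'I_n -> nat,
      - wordfun w0s S`_i = \sum_(j < n) (e j)%:R *: S`_j by move=> i; exact: w0S_neg.
  have [d Hd] := fin_all_exists H; by exists d.
have Eb : beta = \sum_(j < n) (\sum_(i < n) c i * d i j)%N%:R *: S`_j.
  have -> : beta = - wordfun w0s (- u beta).
    by rewrite wordfunN opprK /u wordfun_revK //; exact: w0_nz.
  rewrite Hc wordfun_sum -sumrN.
  rewrite (eq_bigr (fun i => \sum_j ((c i * d i j)%N%:R *: S`_j))); last first.
    move=> i _; rewrite wordfunZ -scalerN Hd scaler_sumr.
    by apply: eq_bigr => j _; rewrite scalerA natrM.
  rewrite exchange_big /=; apply: eq_bigr => j _.
  by rewrite natr_sum scaler_suml.
have kP : (index beta S < n)%N by rewrite index_mem.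
pose k := Ordinal kP.
have Ek : beta = S`_k by rewrite /= nth_index.
have Hcoef : forall j, (\sum_(i < n) c i * d i j)%N = (j == k).
  move=> j; have := coef_uniq (etrans (esym Eb) (etrans Ek (S_sum k))) j.
  by move/eqP; rewrite eqr_nat => /eqP.
have Hsum : (\sum_(i < n) c i * (\sum_(j < n) d i j) = 1)%N.
  rewrite (eq_bigr (fun i : 'I_n => \sum_(j < n) c i * d i j)%N); last by move=> i _; rewrite big_distrr.
  rewrite exchange_big /= (eq_bigr (fun j => (j == k) : nat)); last by move=> j _; rewrite Hcoef.
  by rewrite (bigD1 k) //= eqxx big1 // => j /negbTE ->.
have Hh : forall i, (0 < \sum_(j < n) d i j)%N.
  move=> i; rewrite lt0n; apply/negP => /eqP H0.
  have iS : S`_i \in S by apply: mem_nth.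
  have wP : - wordfun w0s S`_i \in Phi.
    by apply: Phi_opp; apply: wordfun_Phi; [exact: w0_sword | exact: S_Phi].
  move/negP: (Phi_neq0 wP); apply; apply/eqP; rewrite Hd big1 // => j _.
  have /eqP := H0; rewrite sum_nat_eq0 => /forallP /(_ j) /eqP ->.
  by rewrite scale0r.
have [i0 ci0] : exists i0, c i0 != 0%N.
  case: (pickP (fun i => c i != 0%N)) => [i0 Hi0|Hall]; first by exists i0.
  exfalso; move/negP: (Phi_neq0 dP); apply; apply/eqP; rewrite Hc big1 // => i _.
  by have := Hall i; move/negbFE/eqP => ->; rewrite scale0r.
move: Hsum; rewrite (bigD1 i0) //= => Hsum.
have Hi0 : c i0 = 1%N.
  exact: (aux2 (Hh i0) ci0 Hsum).
have Hr0 : (\sum_(i < n | i != i0) c i * (\sum_(j < n) d i j) = 0)%N.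
  move: Hsum; rewrite Hi0 mul1n; exact: (aux1 (Hh i0)).
have Hci : forall i, i != i0 -> c i = 0%N.
  move=> i ii0; have /eqP := Hr0; rewrite sum_nat_eq0 => /forallP /(_ i).
  rewrite ii0 /= muln_eq0 => /orP[/eqP //|/eqP H]; have := Hh i; rewrite H //.
have -> : - u beta = S`_i0.
  rewrite Hc (bigD1 i0) //= Hi0 scale1r big1 ?addr0 // => i ii0.
  by rewrite Hci // scale0r.
exact: mem_nth.
Qed.

End Longest.

End Roots.

Theorem mainTheorem4 (R : realFieldType) (l : nat) (Phi S : seq 'rV[R]_l)
    (alpha varpi : 'rV[R]_l) (w0s gammas : seq 'rV[R]_l) (beta : 'rV[R]_l) :
  root_system Phi -> is_base Phi S ->
  fund_weight S alpha varpi -> minuscule Phi S varpi ->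
  longest_word S w0s ->
  reduced S gammas -> min_coset_rep S alpha gammas ->
  (0 < size gammas)%N ->
  beta \in S -> pairing beta (weyl_inv w0s varpi) = 1 ->
  weyl_inv w0s (last 0 gammas) = beta.
Proof.
move=> RS BS [aS Hfw] _ LW [Hgs _] Hmin Hsz bS Hpair.
have Hlast : last 0 gammas = alpha.
  move: Hgs Hmin Hsz; case/lastP: gammas => [|p c] //; rewrite last_rcons.
  rewrite /sword all_rcons => /andP[cS Hp] Hmin _.
  apply/eqP; apply/negP => /negP ca.
  have H1 : all (fun g => (g \in S) && (g != alpha)) [:: c] by rewrite /= cS ca.
  have := Hmin _ H1 p Hp.
  rewrite size_rcons ltnn => H; suff : false by []; apply: H => x.
  rewrite wordfun_cat wordfun_rcons /= reflK //.
  exact: (Phi_neq0 RS (S_Phi BS cS)).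
rewrite Hlast.
have Hnz := w0_nz RS BS LW.
set u := wordfun (rev w0s).
have gS := u_simple RS BS LW bS; rewrite -/u in gS.
have Eb : beta = wordfun w0s (u beta) by rewrite /u wordfun_revK.
have Hg : pairing (- u beta) varpi = 1.
  have E1 : dotv beta (- wordfun w0s varpi) = dotv (- u beta) varpi.
    by rewrite {1}Eb -wordfunN wordfun_dot // dotvNl dotvNr.
  have E2 : dotv beta beta = dotv (- u beta) (- u beta).
    by rewrite {1 2}Eb wordfun_dot // dotvNl dotvNr opprK.
  by rewrite -Hpair /weyl_inv /pairing E1 E2.
have := Hfw _ gS; rewrite Hg; case: eqP => [E _|_ /eqP]; last by rewrite oner_eq0.
by rewrite /weyl_inv -E wordfunN opprK -Eb.
Qed.
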